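(* For every series-parallel rational expression $e$ there exists a pomset automaton $A$ that is well-nested and finitely supported and has a state $q_e$ such that $L_A(q_e)=[\![e]\!]$.
   Context: Fix a finite alphabet $\Sigma$. A pomset is an isomorphism class of labelled posets $\langle C, \leq, \lambda\rangle$ with $\lambda: C \to \Sigma$; $1$ is the empty pomset and $a\in\Sigma$ the one-point pomset labelled $a$. Sequential composition $U\cdot V$ puts the two (disjoint) pomsets side by side with every element of $U$ below every element of $V$; parallel composition $U\parallel V$ is the disjoint union without extra order. $\mathsf{Pom}^{\mathsf{sp}}$ is the smallest set of pomsets containing $1$ and all $a\in\Sigma$, closed under $\cdot$ and $\parallel$. For pomset languages, $\mathcal U\cdot\mathcal V$ and $\mathcal U\parallel\mathcal V$ are pointwise, $\mathcal U^*=\bigcup_n\mathcal U^n$, $\mathcal U^\dagger=\bigcup_n\mathcal U^{(n)}$ with $\mathcal U^0=\mathcal U^{(0)}=\{1\}$, $\mathcal U^{n+1}=\mathcal U\cdot\mathcal U^n$, $\mathcal U^{(n+1)}=\mathcal U\parallel\mathcal U^{(n)}$. Spr-expressions: $e,f ::= 0 \mid 1 \mid a\in\Sigma \mid e+f \mid e\cdot f \mid e\parallel f \mid e^* \mid e^\dagger$, with $[\![0]\!]=\emptyset$, $[\![1]\!]=\{1\}$, $[\![a]\!]=\{a\}$, and $+,\cdot,\parallel,{}^*,{}^\dagger$ interpreted as union and the language operations above. A PA is $A=\langle Q,\delta,\gamma,F\rangle$ with $F\subseteq Q$, $\delta:Q\times\Sigma\to Q$, $\gamma:Q^3\to Q$,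 containing states $\bot\notin F$, $\top\in F$ with $\delta(\bot,a)=\delta(\top,a)=\bot$, $\gamma(\bot,r,s)=\gamma(\top,r,s)=\bot$. Traces: the smallest relation with $q\xrightarrow{1}_A q$; $q\xrightarrow{a}_A\delta(q,a)$; $q\xrightarrow{U}_A q''\xrightarrow{V}_A q'$ implies $q\xrightarrow{U\cdot V}_A q'$; $r\xrightarrow{U}_A r'\in F$ and $s\xrightarrow{V}_A s'\in F$ imply $q\xrightarrow{U\parallel V}_A\gamma(q,r,s)$. $L_A(q)=\{U:\exists q'\in F.\ q\xrightarrow{U}_A q'\}$. $\preceq_A$ is the smallest preorder on $Q$ with $r,s\preceq_A q$ when $\gamma(q,r,s)\neq\bot$, $\delta(q,a)\preceq_A q$, and $\gamma(q,r,s)\preceq_A q$; $q\prec_A q'$ iff $q\preceq_A q'$ and $q'\not\preceq_A q$. $\pi_A(q)$ is the smallest $\preceq_A$-downward-closed set containing $q$; $A$ is finitely supported if all $\pi_A(q)$ are finite. A state $q$ is sequential if $\gamma(q,r,s)\neq\bot$ implies $r,s\prec_A q$; $q\in F$ is recursive if it is not sequential, $\delta(q,a)=\bot$ for all $a$, and $\gamma(q,r,s)\neq\bot$ implies $s=q$, $r\prec_A q$, $\gamma(q,r,s)=\top$. $A$ is well-nested if each state is sequential or recursive. *)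

(* Defs.v *)
From Stdlib Require Import Relations.
From Stdlib Require List.
From mathcomp Require Import all_boot.
Set Implicit Arguments.
Unset Strict Implicit.
Unset Printing Implicit Defensive.

(* Labelled posets; pomsets are their isomorphism classes.  We work    *)
(* with representatives and make every language isomorphism-closed.  *)

Definition is_porder (A : Type) (R : A -> A -> bool) : Prop :=
  [/\ forall x, R x x,
      forall x y, R x y -> R y x -> x = y &
      forall x y z, R x y -> R y z -> R x z].

Record lposet (Sigma : Type) := LPoset {
  lp_size : nat;
  lp_le : 'I_lp_size -> 'I_lp_size -> bool;
  lp_lab : 'I_lp_size -> Sigma;
  lp_porder : is_porder lp_le }.
Arguments lp_size {Sigma} l.
Arguments lp_le {Sigma} l _ _.
Arguments lp_lab {Sigma} l _.
Arguments lp_porder {Sigma} l.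

Definition lp_iso (Sigma : Type) (U V : lposet Sigma) : Prop :=
  exists f : 'I_(lp_size U) -> 'I_(lp_size V),
    [/\ bijective f,
        forall x, lp_lab V (f x) = lp_lab U x &
        forall x y, lp_le U x y = lp_le V (f x) (f y)].

Lemma porder_inj (A B : Type) (R : B -> B -> bool) (f : A -> B) :
  injective f -> is_porder R -> is_porder (fun x y => R (f x) (f y)).
Proof.
move=> finj [r a t]; split=> //.
- by move=> x y h1 h2; apply: finj; apply: a.
- by move=> x y z; apply: t.
Qed.

Lemma ord0_False (x : 'I_0) : False.
Proof. by case: x. Qed.

Definition lp_one (Sigma : Type) : lposet Sigma.
Proof.
refine (@LPoset Sigma 0 (fun _ _ => true) (fun x => False_rect _ (ord0_False x)) _).
by split=> [[]|[]|[]].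
Defined.

Arguments lp_one Sigma : clear implicits.

Definition lp_atom (Sigma : Type) (a : Sigma) : lposet Sigma.
Proof.
refine (@LPoset Sigma 1 (fun x y => x == y) (fun _ => a) _).
split=> [x|x y /eqP //|x y z /eqP -> //]; exact: eqxx.
Defined.

Definition seq_rel (A B : Type) (RA : A -> A -> bool) (RB : B -> B -> bool)
  (u v : A + B) : bool :=
  match u, v with
  | inl x, inl y => RA x y
  | inr x, inr y => RB x y
  | inl _, inr _ => true
  | inr _, inl _ => false
  end.

Definition par_rel (A B : Type) (RA : A -> A -> bool) (RB : B -> B -> bool)
  (u v : A + B) : bool :=
  match u, v with
  | inl x, inl y => RA x y
  | inr x, inr y => RB x y
  | _, _ => false
  end.

Lemma seq_rel_porder A B RA RB :
  is_porder RA -> is_porder RB -> is_porder (@seq_rel A B RA RB).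
Proof.
move=> [ra aa ta] [rb ab tb]; split.
- by case.
- by case=> x [] y //= h1 h2; [rewrite (aa _ _ h1 h2)|rewrite (ab _ _ h1 h2)].
- by case=> x [] y [] z //=; [apply: ta|apply: tb].
Qed.

Lemma par_rel_porder A B RA RB :
  is_porder RA -> is_porder RB -> is_porder (@par_rel A B RA RB).
Proof.
move=> [ra aa ta] [rb ab tb]; split.
- by case.
- by case=> x [] y //= h1 h2; [rewrite (aa _ _ h1 h2)|rewrite (ab _ _ h1 h2)].
- by case=> x [] y [] z //=; [apply: ta|apply: tb].
Qed.

Lemma split_inj m n : injective (@split m n).
Proof. exact: can_inj (@splitK m n). Qed.

Definition lab_sum (Sigma : Type) m n (l1 : 'I_m -> Sigma) (l2 : 'I_n -> Sigma)
  (x : 'I_(m + n)) : Sigma :=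
  match split x with inl i => l1 i | inr j => l2 j end.

Definition lp_seq (Sigma : Type) (U V : lposet Sigma) : lposet Sigma :=
  @LPoset Sigma (lp_size U + lp_size V)
    (fun x y => seq_rel (lp_le U) (lp_le V) (split x) (split y))
    (lab_sum (lp_lab U) (lp_lab V))
    (porder_inj (@split_inj _ _)
       (seq_rel_porder (lp_porder U) (lp_porder V))).

Definition lp_par (Sigma : Type) (U V : lposet Sigma) : lposet Sigma :=
  @LPoset Sigma (lp_size U + lp_size V)
    (fun x y => par_rel (lp_le U) (lp_le V) (split x) (split y))
    (lab_sum (lp_lab U) (lp_lab V))
    (porder_inj (@split_inj _ _)
       (par_rel_porder (lp_porder U) (lp_porder V))).

Definition planguage (Sigma : Type) := lposet Sigma -> Prop.

Definition lang_seq (Sigma : Type) (L M : planguage Sigma) : planguage Sigma :=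
  fun W => exists U V, [/\ L U, M V & lp_iso W (lp_seq U V)].

Definition lang_par (Sigma : Type) (L M : planguage Sigma) : planguage Sigma :=
  fun W => exists U V, [/\ L U, M V & lp_iso W (lp_par U V)].

Definition lang_one (Sigma : Type) : planguage Sigma :=
  fun W => lp_iso W (lp_one Sigma).
Arguments lang_one Sigma : clear implicits.

Fixpoint lang_seqpow (Sigma : Type) (L : planguage Sigma) (n : nat) :=
  match n with
  | 0 => lang_one Sigma
  | k.+1 => lang_seq L (lang_seqpow L k)
  end.

Fixpoint lang_parpow (Sigma : Type) (L : planguage Sigma) (n : nat) :=
  match n with
  | 0 => lang_one Sigma
  | k.+1 => lang_par L (lang_parpow L k)
  end.

Inductive spr (Sigma : Type) : Type :=
| spr_zero
| spr_one
| spr_atom of Sigma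
| spr_plus of spr Sigma & spr Sigma
| spr_seq of spr Sigma & spr Sigma
| spr_par of spr Sigma & spr Sigma
| spr_star of spr Sigma
| spr_dagger of spr Sigma.

Fixpoint spr_sem (Sigma : Type) (e : spr Sigma) : planguage Sigma :=
  match e with
  | spr_zero => fun _ => False
  | spr_one => lang_one Sigma
  | spr_atom a => fun W => lp_iso W (lp_atom a)
  | spr_plus e f => fun W => spr_sem e W \/ spr_sem f W
  | spr_seq e f => lang_seq (spr_sem e) (spr_sem f)
  | spr_par e f => lang_par (spr_sem e) (spr_sem f)
  | spr_star e => fun W => exists n, lang_seqpow (spr_sem e) n W
  | spr_dagger e => fun W => exists n, lang_parpow (spr_sem e) n W
  end.

Record PA (Sigma : Type) := MkPA {
  pa_Q : Type;
  pa_delta : pa_Q -> Sigma -> pa_Q;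
  pa_gamma : pa_Q -> pa_Q -> pa_Q -> pa_Q;
  pa_F : pa_Q -> Prop;
  pa_bot : pa_Q;
  pa_top : pa_Q;
  pa_bot_notF : ~ pa_F pa_bot;
  pa_top_F : pa_F pa_top;
  pa_delta_bot : forall a, pa_delta pa_bot a = pa_bot;
  pa_delta_top : forall a, pa_delta pa_top a = pa_bot;
  pa_gamma_bot : forall r s, pa_gamma pa_bot r s = pa_bot;
  pa_gamma_top : forall r s, pa_gamma pa_top r s = pa_bot }.
Arguments pa_Q {Sigma} p.
Arguments pa_delta {Sigma} p _ _.
Arguments pa_gamma {Sigma} p _ _ _.
Arguments pa_F {Sigma} p _.
Arguments pa_bot {Sigma} p.
Arguments pa_top {Sigma} p.

Section PAdefs.
Variables (Sigma : Type) (A : PA Sigma).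
Local Notation Q := (pa_Q A).
Local Notation delta := (pa_delta A).
Local Notation gamma := (pa_gamma A).
Local Notation F := (pa_F A).
Local Notation bot := (pa_bot A).
Local Notation top := (pa_top A).

Inductive pa_trace : Q -> lposet Sigma -> Q -> Prop :=
| tr_one q W : lp_iso W (lp_one Sigma) -> pa_trace q W q
| tr_atom q a W : lp_iso W (lp_atom a) -> pa_trace q W (delta q a)
| tr_seq q q'' q' U V W :
    pa_trace q U q'' -> pa_trace q'' V q' ->
    lp_iso W (lp_seq U V) -> pa_trace q W q'
| tr_par q r r' s s' U V W :
    pa_trace r U r' -> F r' -> pa_trace s V s' -> F s' ->
    lp_iso W (lp_par U V) -> pa_trace q W (gamma q r s).

Definition pa_lang (q : Q) : planguage Sigma :=
  fun U => exists q', F q' /\ pa_trace q U q'.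

(* generating steps of the preorder: pa_step p q means p ⪯_A q is required *)
Definition pa_step (p q : Q) : Prop :=
  (exists r s, gamma q r s <> bot /\ (p = r \/ p = s))
  \/ (exists a, p = delta q a)
  \/ (exists r s, p = gamma q r s).

Definition pa_le : Q -> Q -> Prop := clos_refl_trans Q pa_step.

Definition pa_lt (p q : Q) : Prop := pa_le p q /\ ~ pa_le q p.

Definition pa_support (q : Q) : Q -> Prop := fun p => pa_le p q.

Definition finitely_supported : Prop :=
  forall q, exists l : list Q, forall p, pa_support q p -> List.In p l.

Definition pa_sequential (q : Q) : Prop :=
  forall r s, gamma q r s <> bot -> pa_lt r q /\ pa_lt s q.

Definition pa_recursive (q : Q) : Prop :=
  [/\ F q, ~ pa_sequential q, (forall a, delta q a = bot) &
      forall r s, gamma q r s <> bot ->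
        [/\ s = q, pa_lt r q & gamma q r s = top]].

Definition well_nested : Prop :=
  forall q, pa_sequential q \/ pa_recursive q.

End PAdefs.

Arguments pa_trace {Sigma} A _ _ _.
Arguments pa_lang {Sigma} A q _.
Arguments pa_step {Sigma} A p q.
Arguments pa_le {Sigma} A _ _.
Arguments pa_lt {Sigma} A p q.
Arguments pa_support {Sigma} A q _.
Arguments pa_sequential {Sigma} A q.
Arguments pa_recursive {Sigma} A q.
Arguments finitely_supported {Sigma} A.
Arguments well_nested {Sigma} A.

(* Main.v *)
Require Import Defs.
From Stdlib Require Import Relations.
From Stdlib Require List.
From mathcomp Require Import all_boot zify.
Set Implicit Arguments.
Unset Strict Implicit.
Unset Printing Implicit Defensive.

Lemma iso_refl (S : Type) (U : lposet S) : lp_iso U U.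
Proof. exists id; split => //; exists id => //. Qed.

Lemma iso_sym (S : Type) (U V : lposet S) : lp_iso U V -> lp_iso V U.
Proof.
case=> f [[g fg gf] hl hle]; exists g; split.
- by exists f.
- by move=> x; rewrite -{2}(gf x) hl.
- by move=> x y; rewrite hle !gf.
Qed.

Lemma iso_trans (S : Type) (U V W : lposet S) : lp_iso U V -> lp_iso V W -> lp_iso U W.
Proof.
case=> f [bf hl hle] [g [bg hl' hle']]; exists (g \o f); split.
- exact: bij_comp.
- by move=> x /=; rewrite hl' hl.
- by move=> x y /=; rewrite hle hle'.
Qed.

Lemma iso_size (S : Type) (U V : lposet S) : lp_iso U V -> lp_size U = lp_size V.
Proof.
case=> f [[g fg gf] _ _].
have := card_ord (lp_size U); have := card_ord (lp_size V).
move=> <- <-; apply/eqP; rewrite eqn_leq; apply/andP; split.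
- apply: (leq_card f); exact: can_inj fg.
- apply: (leq_card g); exact: can_inj gf.
Qed.

Lemma size0_iso1 (S : Type) (W : lposet S) : lp_size W = 0 -> lp_iso W (lp_one S).
Proof.
move=> h; exists (cast_ord h); split.
- exists (cast_ord (esym h)); [exact: cast_ordK | exact: cast_ordKV].
- move=> x; exfalso; have := ltn_ord x; rewrite {2}h //.
- move=> x; exfalso; have := ltn_ord x; rewrite {2}h //.
Qed.

Lemma iso1_size0 (S : Type) (W : lposet S) : lp_iso W (lp_one S) -> lp_size W = 0.
Proof. by move/iso_size. Qed.

Ltac ordeq := apply: val_inj => /=; lia.

Ltac dosplit :=
  repeat match goal with
  | |- context [@split ?m ?n ?x] => case: (@splitP m n x) => [?|?] ? => /=
  end.

Ltac bounds := repeat match goal with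
 | [ H : 'I_ ?n |- _ ] => lazymatch goal with
     | [ _ : is_true (nat_of_ord H < n) |- _ ] => fail
     | _ => have := ltn_ord H; move=> ? end end.

Ltac fin_ord := bounds; simpl in *;
  match goal with
  | |- _ => (by [])
  | |- _ => (exfalso; lia)
  | |- _ => (f_equal; ordeq)
  end.

Definition cast_iso (S : Type) (U V : lposet S) (h : lp_size U = lp_size V) :
  (forall x, lp_lab V (cast_ord h x) = lp_lab U x) ->
  (forall x y, lp_le U x y = lp_le V (cast_ord h x) (cast_ord h y)) ->
  lp_iso U V.
Proof.
move=> hl hle; exists (cast_ord h); split => //.
exists (cast_ord (esym h)); [exact: cast_ordK | exact: cast_ordKV].
Qed.

Lemma seq_unit_r (S : Type) (W X : lposet S) : lp_size X = 0 -> lp_iso (lp_seq W X) W.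
Proof.
move=> h0; have h : lp_size (lp_seq W X) = lp_size W by rewrite /= h0 addn0.
apply: (@cast_iso S (lp_seq W X) W h).
- by move=> x /=; rewrite /lab_sum; dosplit; fin_ord.
- by move=> x y /=; dosplit => /=; fin_ord.
Qed.

Lemma par_unit_r (S : Type) (W X : lposet S) : lp_size X = 0 -> lp_iso (lp_par W X) W.
Proof.
move=> h0; have h : lp_size (lp_par W X) = lp_size W by rewrite /= h0 addn0.
apply: (@cast_iso S (lp_par W X) W h).
- by move=> x /=; rewrite /lab_sum; dosplit; fin_ord.
- by move=> x y /=; dosplit => /=; fin_ord.
Qed.

Lemma seq_unit_l (S : Type) (W X : lposet S) : lp_size W = 0 -> lp_iso (lp_seq W X) X.
Proof.
move=> h0; have h : lp_size (lp_seq W X) = lp_size X by rewrite /= h0.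
apply: (@cast_iso S (lp_seq W X) X h).
- by move=> x /=; rewrite /lab_sum; dosplit; fin_ord.
- by move=> x y /=; dosplit => /=; fin_ord.
Qed.

Lemma seq_assoc (S : Type) (U V X : lposet S) :
  lp_iso (lp_seq (lp_seq U V) X) (lp_seq U (lp_seq V X)).
Proof.
have h : lp_size (lp_seq (lp_seq U V) X) = lp_size (lp_seq U (lp_seq V X)) by rewrite /= addnA.
apply: (@cast_iso S _ _ h).
- by move=> x /=; rewrite /lab_sum; dosplit; fin_ord.
- by move=> x y /=; dosplit => /=; fin_ord.
Qed.

Definition smap A B A' B' (f : A -> A') (g : B -> B') (u : A + B) : A' + B' :=
  match u with inl a => inl (f a) | inr b => inr (g b) end.

Lemma seq_congr (S : Type) (U U' V V' : lposet S) :
  lp_iso U U' -> lp_iso V V' -> lp_iso (lp_seq U V) (lp_seq U' V').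
Proof.
case=> f1 [[g1 fg1 gf1] hl1 hle1] [f2 [[g2 fg2 gf2] hl2 hle2]].
exists (fun x => unsplit (smap f1 f2 (split x))); split.
- exists (fun x => unsplit (smap g1 g2 (split x))) => x;
  rewrite unsplitK -[RHS]splitK; case: (split x) => a /=; by rewrite ?fg1 ?fg2 ?gf1 ?gf2.
- by move=> x /=; rewrite /lab_sum unsplitK; case: (split x) => a /=.
- by move=> x y /=; rewrite !unsplitK; case: (split x) => a; case: (split y) => b /=.
Qed.

Lemma par_congr (S : Type) (U U' V V' : lposet S) :
  lp_iso U U' -> lp_iso V V' -> lp_iso (lp_par U V) (lp_par U' V').
Proof.
case=> f1 [[g1 fg1 gf1] hl1 hle1] [f2 [[g2 fg2 gf2] hl2 hle2]].
exists (fun x => unsplit (smap f1 f2 (split x))); split.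
- exists (fun x => unsplit (smap g1 g2 (split x))) => x;
  rewrite unsplitK -[RHS]splitK; case: (split x) => a /=; by rewrite ?fg1 ?fg2 ?gf1 ?gf2.
- by move=> x /=; rewrite /lab_sum unsplitK; case: (split x) => a /=.
- by move=> x y /=; rewrite !unsplitK; case: (split x) => a; case: (split y) => b /=.
Qed.

Inductive st (Sigma : Type) := Bot | Top | Ex of spr Sigma | Call of spr Sigma.
Arguments Bot {Sigma}. Arguments Top {Sigma}.

Definition spr_dec (Sigma : eqType) (x y : spr Sigma) : {x = y} + {x <> y}.
Proof. decide equality; exact: eq_comparable. Defined.

Definition st_dec (Sigma : eqType) (x y : st Sigma) : {x = y} + {x <> y}.
Proof. decide equality; exact: spr_dec. Defined.
Arguments st_dec : simpl never.

Definition dl (Sigma : eqType) (q : st Sigma) (a : Sigma) : st Sigma :=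
  match q with
  | Ex (spr_atom b) => if a == b then Top else Bot
  | _ => Bot
  end.

Definition gm (Sigma : eqType) (q r s : st Sigma) : st Sigma :=
  match q with
  | Ex (spr_plus e f) =>
      if st_dec s Top then
        (if st_dec r (Ex e) then Top else if st_dec r (Ex f) then Top else Bot)
      else Bot
  | Ex (spr_seq e f) =>
      if st_dec s Top then (if st_dec r (Ex e) then Call f else Bot) else Bot
  | Call f =>
      if st_dec s Top then (if st_dec r (Ex f) then Top else Bot) else Bot
  | Ex (spr_par e f) =>
      if st_dec r (Ex e) then (if st_dec s (Ex f) then Top else Bot) else Bot
  | Ex (spr_star e) =>
      if st_dec s Top then (if st_dec r (Ex e) then Ex (spr_star e) else Bot) else Bot
  | Ex (spr_dagger e) =>
      if st_dec r (Ex e) then (if st_dec s (Ex (spr_dagger e)) then Top else Bot) else Bot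
  | _ => Bot
  end.

Definition fin (Sigma : eqType) (q : st Sigma) : Prop :=
  match q with
  | Top => True
  | Ex spr_one => True
  | Ex (spr_star _) => True
  | Ex (spr_dagger _) => True
  | _ => False
  end.

Definition Aut (Sigma : eqType) : PA Sigma.
Proof.
refine (@MkPA Sigma (st Sigma) (@dl Sigma) (@gm Sigma) (@fin Sigma) Bot Top _ _ _ _ _ _);
  by [].
Defined.

Definition Sem (Sigma : eqType) (q : st Sigma) : planguage Sigma :=
  match q with
  | Bot => fun _ => False
  | Top => lang_one Sigma
  | Ex e => spr_sem e
  | Call f => spr_sem f
  end.

Lemma spr_closed (Sigma : eqType) (e : spr Sigma) W W' :
  lp_iso W W' -> spr_sem e W -> spr_sem e W'.
Proof.
have seqc : forall (L M : planguage Sigma) W W', lp_iso W W' -> lang_seq L M W -> lang_seq L M W'.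
  move=> L M X X' i [U [V [hU hV hi]]]; exists U, V; split => //.
  exact: iso_trans (iso_sym i) hi.
have parc : forall (L M : planguage Sigma) W W', lp_iso W W' -> lang_par L M W -> lang_par L M W'.
  move=> L M X X' i [U [V [hU hV hi]]]; exists U, V; split => //.
  exact: iso_trans (iso_sym i) hi.
have onec : forall W W', lp_iso W W' -> lang_one Sigma W -> lang_one Sigma W'.
  by move=> X X' i hi; exact: iso_trans (iso_sym i) hi.
elim: e W W' => /=.
- by [].
- exact: onec.
- by move=> a X X' i hi; exact: iso_trans (iso_sym i) hi.
- by move=> e IHe f IHf X X' i [h|h]; [left; exact: IHe i h | right; exact: IHf i h].
- by move=> e _ f _; apply: seqc.
- by move=> e _ f _; apply: parc.
- move=> e _ X X' i [n h]; exists n; move: X X' i h; case: n => [|n] /=; [exact: onec | exact: seqc].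
- move=> e _ X X' i [n h]; exists n; move: X X' i h; case: n => [|n] /=; [exact: onec | exact: parc].
Qed.

Lemma Sem_closed (Sigma : eqType) (q : st Sigma) W W' :
  lp_iso W W' -> Sem q W -> Sem q W'.
Proof.
case: q => //= [|e|f]; try exact: spr_closed.
by move=> i hi; exact: iso_trans (iso_sym i) hi.
Qed.

Lemma fin_one (Sigma : eqType) (q : st Sigma) : fin q -> Sem q (lp_one Sigma).
Proof.
case: q => //= [_|e]; first exact: iso_refl.
case: e => //= [_|e _|e _]; first exact: iso_refl.
- by exists 0; exact: iso_refl.
- by exists 0; exact: iso_refl.
Qed.

Lemma sound (Sigma : eqType) (q : st Sigma) W q' :
  pa_trace (Aut Sigma) q W q' -> forall X, Sem q' X -> Sem q (lp_seq W X).
Proof.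
elim => {q W q'}.
- move=> q W i X hX; apply: Sem_closed hX; apply: iso_sym; apply: seq_unit_l.
  exact: iso1_size0.
- move=> q a W i X /=; case: q => // -[] // b /=.
  case: eqP => // <- /= /iso1_size0 h0.
  apply: iso_trans (seq_unit_r _ h0) i.
- move=> q q'' q' U V W _ IH1 _ IH2 i X hX.
  apply: Sem_closed (IH1 _ (IH2 _ hX)).
  apply: iso_trans (iso_sym (seq_assoc _ _ _)) _.
  apply: seq_congr (iso_sym i) (iso_refl _).
- move=> q r r' s s' U V W _ IHr Fr _ IHs Fs i X.
  have hU : Sem r U by apply: Sem_closed (IHr _ (fin_one Fr)); apply: seq_unit_r.
  have hV : Sem s V by apply: Sem_closed (IHs _ (fin_one Fs)); apply: seq_unit_r.
  move=> hX.
  suff : Sem q (lp_seq (lp_par U V) X).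
    by apply: Sem_closed; apply: seq_congr (iso_sym i) (iso_refl _).
  move: hX; rewrite /=.
  case: q => [| |e|f] //=; last first.
    repeat case: st_dec => // ?; subst => /=.
    move/iso1_size0=> hX0; move/iso1_size0: hV => hV0; apply: spr_closed hU.
    exact: iso_sym (iso_trans (seq_unit_r _ hX0) (par_unit_r _ hV0)).
  case: e => //= [e f|e f|e f|e|e]; repeat case: st_dec => //= ?; subst => /=.
  - move/iso1_size0=> hX0; move/iso1_size0: hV => hV0; left; apply: spr_closed hU.
    exact: iso_sym (iso_trans (seq_unit_r _ hX0) (par_unit_r _ hV0)).
  - move/iso1_size0=> hX0; move/iso1_size0: hV => hV0; right; apply: spr_closed hU.
    exact: iso_sym (iso_trans (seq_unit_r _ hX0) (par_unit_r _ hV0)).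
  - move=> hX; move/iso1_size0: hV => hV0; exists U, X; split => //.
    exact: seq_congr (par_unit_r _ hV0) (iso_refl X).
  - move/iso1_size0=> hX0; exists U, V; split => //; exact: seq_unit_r.
  - move/iso1_size0: hV => hV0 [n hn]; exists n.+1, U, X; split => //.
    exact: seq_congr (par_unit_r _ hV0) (iso_refl X).
  - move/iso1_size0=> hX0; case: hV => n hn; exists n.+1, U, V; split => //.
    exact: seq_unit_r.
Qed.

Lemma ifdec_refl (Sigma : eqType) (A : Type) (x : st Sigma) (a b : A) :
  (if st_dec x x then a else b) = a.
Proof. by case: st_dec => // n; case: n. Qed.

Lemma call (Sigma : eqType) (q r r' : st Sigma) U :
  pa_trace (Aut Sigma) r U r' -> fin r' -> pa_trace (Aut Sigma) q U (gm q r Top).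
Proof.
move=> h f.
apply: (@tr_par _ (Aut Sigma) q r r' Top Top U (lp_one Sigma) U h f).
- by apply: tr_one; exact: iso_refl.
- by [].
- by apply: iso_sym; apply: par_unit_r.
Qed.

Lemma complete (Sigma : eqType) (e : spr Sigma) W :
  spr_sem e W -> pa_lang (Aut Sigma) (Ex e) W.
Proof.
elim: e W => /=.
- by [].
- by move=> W h; exists (Ex (@spr_one Sigma)); split => //; apply: tr_one.
- move=> a W h; exists Top; split => //.
  have := @tr_atom _ (Aut Sigma) (Ex (spr_atom a)) a W h; by rewrite /= eqxx.
- move=> e IHe f IHf W [h|h].
  + case: (IHe _ h) => q' [Fq t]; exists Top; split => //.
    have := call (Ex (spr_plus e f)) t Fq; by rewrite /= !ifdec_refl.
  + case: (IHf _ h) => q' [Fq t]; exists Top; split => //.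
    have := call (Ex (spr_plus e f)) t Fq; rewrite /= ifdec_refl.
    by case: (st_dec (Ex f) (Ex e)) => ?; rewrite ?ifdec_refl.
- move=> e IHe f IHf W [U [V [hU hV i]]].
  case: (IHe _ hU) => q1 [F1 t1]; case: (IHf _ hV) => q2 [F2 t2].
  exists Top; split => //; apply: (@tr_seq _ (Aut Sigma) _ (Call f) _ _ _ _ _ _ i).
  + have := call (Ex (spr_seq e f)) t1 F1; by rewrite /= !ifdec_refl.
  + have := call (Call f) t2 F2; by rewrite /= !ifdec_refl.
- move=> e IHe f IHf W [U [V [hU hV i]]].
  case: (IHe _ hU) => q1 [F1 t1]; case: (IHf _ hV) => q2 [F2 t2].
  exists Top; split => //.
  have := @tr_par _ (Aut Sigma) (Ex (spr_par e f)) _ _ _ _ U V W t1 F1 t2 F2 i.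
  by rewrite /= !ifdec_refl.
- move=> e IHe W [n h]; exists (Ex (spr_star e)); split => //.
  elim: n W h => [|n IHn] W /=; first by move=> h; apply: tr_one.
  case=> U [V [hU hV i]]; apply: (tr_seq _ (IHn _ hV) i).
  case: (IHe _ hU) => q1 [F1 t1].
  have := call (Ex (spr_star e)) t1 F1; by rewrite /= !ifdec_refl.
- move=> e IHe W [n h].
  elim: n W h => [|n IHn] W /=.
    by move=> h; exists (Ex (spr_dagger e)); split => //; apply: tr_one.
  case=> U [V [hU hV i]].
  case: (IHe _ hU) => q1 [F1 t1]; case: (IHn _ hV) => q2 [F2 t2].
  exists Top; split => //.
  have := @tr_par _ (Aut Sigma) (Ex (spr_dagger e)) _ _ _ _ U V W t1 F1 t2 F2 i.
  by rewrite /= !ifdec_refl.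
Qed.

Lemma lang_ok (Sigma : eqType) (e : spr Sigma) W :
  pa_lang (Aut Sigma) (Ex e) W <-> spr_sem e W.
Proof.
split; last exact: complete.
case=> q' [Fq t]; have := sound t (fin_one Fq).
by apply: spr_closed; apply: seq_unit_r.
Qed.

Fixpoint sz (Sigma : Type) (e : spr Sigma) : nat :=
  match e with
  | spr_plus e f | spr_seq e f | spr_par e f => (sz e + sz f).+1
  | spr_star e | spr_dagger e => (sz e).+1
  | _ => 1
  end.

Lemma sz_pos (Sigma : Type) (e : spr Sigma) : 0 < sz e.
Proof. by case: e. Qed.

Definition rk (Sigma : Type) (q : st Sigma) : nat :=
  match q with Bot => 0 | Top => 0 | Ex e => sz e | Call f => (sz f).+1 end.

Lemma gm_cases (Sigma : eqType) (q r s : st Sigma) : gm q r s <> Bot ->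
  (rk r < rk q /\ rk s < rk q) \/
  (exists e, [/\ q = Ex (spr_dagger e), r = Ex e, s = q & gm q r s = Top]).
Proof.
have P := @sz_pos Sigma.
case: q => [| |e|f] //=; last first.
  by repeat case: st_dec => // ?; subst => /= _; left; split => //; lia.
case: e => //= [e f|e f|e f|e|e]; repeat case: st_dec => //= ?; subst => /= _.
all: try (left; split; move: (P e) (P f); lia).
all: try (left; split; move: (P e); lia).
right; exists e; split => //; by rewrite ifdec_refl.
Qed.

Lemma gm_rk (Sigma : eqType) (q r s : st Sigma) : rk (gm q r s) <= rk q.
Proof.
case: q => [| |e|f] //=; last first.
  by repeat case: st_dec => // ?.
case: e => //= [e f|e f|e f|e|e]; repeat case: st_dec => //= ?; lia.
Qed.

Lemma step_rk (Sigma : eqType) (p q : st Sigma) : pa_step (Aut Sigma) p q -> rk p <= rk q.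
Proof.
case=> [[r [s [ne [->|->]]]]|[[a ->]|[r [s ->]]]].
- by case: (gm_cases ne) => [[/ltnW]|[e [-> -> _ _]]] //; rewrite leqnn.
- by case: (gm_cases ne) => [[_ /ltnW]|[e [-> -> -> _]]] //.
- rewrite /=; case: q => [| |e|f] //=; case: e => //= b; by case: (_ == _).
- exact: (gm_rk q r s).
Qed.

Lemma le_rk (Sigma : eqType) (p q : st Sigma) : pa_le (Aut Sigma) p q -> rk p <= rk q.
Proof.
elim => [x y /step_rk //| x // | x y z _ h1 _ h2]; exact: leq_trans h1 h2.
Qed.

Lemma lt_of (Sigma : eqType) (p q : st Sigma) :
  pa_step (Aut Sigma) p q -> rk p < rk q -> pa_lt (Aut Sigma) p q.
Proof.
move=> hs hr; split; first exact: rt_step.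
by move/le_rk; rewrite leqNgt hr.
Qed.

Lemma seqc (Sigma : eqType) (q : st Sigma) :
  (forall e, q <> Ex (spr_dagger e)) -> pa_sequential (Aut Sigma) q.
Proof.
move=> nd r s ne; case: (gm_cases ne) => [[h1 h2]|[e [E _ _ _]]]; last by case: (nd e).
split; apply: lt_of => //; left; exists r, s; split => //; by [left|right].
Qed.

Lemma wn (Sigma : eqType) : well_nested (Aut Sigma).
Proof.
move=> q.
case: q => [| |e|f]; try (by left; apply: seqc).
case: e => [| |a|e f|e f|e f|e|e]; try (by left; apply: seqc).
right; split => //.
- have ne : gm (Ex (spr_dagger e)) (Ex e) (Ex (spr_dagger e)) <> Bot.
    rewrite [gm _ _ _]/= !ifdec_refl; discriminate.
  move=> H; case: (H _ _ ne) => _ [_]; apply; apply: rt_refl.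
- move=> r s ne; case: (gm_cases ne) => [[h1 h2]|[e' [[<-] -> -> Eg]]].
  + by move: h2 ne => /=; case: st_dec => //= ? ; case: st_dec => //= ?; subst => /=; lia.
  + split => //; apply: lt_of => /=; last by [].
    left; exists (Ex e), (Ex (spr_dagger e)); split; last by left.
    by rewrite /= !ifdec_refl.
Qed.

Fixpoint descE (Sigma : Type) (e : spr Sigma) : list (st Sigma) :=
  Ex e :: Top :: Bot ::
  match e with
  | spr_plus e1 e2 | spr_par e1 e2 => Ex e1 :: Ex e2 :: (descE e1 ++ descE e2)
  | spr_seq e1 e2 => Ex e1 :: Call e2 :: Ex e2 :: (descE e1 ++ descE e2)
  | spr_star e1 | spr_dagger e1 => Ex e1 :: descE e1
  | _ => nil
  end%list.

Definition desc (Sigma : Type) (q : st Sigma) : list (st Sigma) :=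
  match q with
  | Bot => (Bot :: nil)%list
  | Top => (Top :: Bot :: nil)%list
  | Ex e => descE e
  | Call f => (Call f :: Top :: Bot :: Ex f :: descE f)%list
  end.

Ltac inl_tac := simpl; solve [repeat (first [by left | right])].

Lemma incl_descE (Sigma : Type) (e : spr Sigma) p :
  List.In p (descE e) -> List.incl (desc p) (descE e).
Proof.
elim: e p => /= [p|p|a p|e1 IH1 e2 IH2 p|e1 IH1 e2 IH2 p|e1 IH1 e2 IH2 p|e1 IH1 p|e1 IH1 p].
all: move=> H x Hx.
all: repeat (case: H Hx => [<-|H] Hx; [by move: Hx; rewrite /= ?List.in_app_iff; tauto|]).
all: try by case: H.
all: try (move: H; rewrite List.in_app_iff => -[H|H]; [move: (IH1 _ H x Hx)|move: (IH2 _ H x Hx)]; rewrite /= List.in_app_iff; tauto).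
all: try (move: (IH1 _ H x Hx); rewrite /=; tauto).
Qed.

Lemma incl_desc (Sigma : Type) (q p : st Sigma) :
  List.In p (desc q) -> List.incl (desc p) (desc q).
Proof.
case: q => [| |e|f] /=.
- by case=> [<-|[]].
- by case=> [<-|[<-|[]]] x /=; tauto.
- exact: incl_descE.
- move=> H x Hx.
  repeat (case: H Hx => [<-|H] Hx; [by move: Hx; rewrite /=; tauto|]).
  by move: (incl_descE H Hx) => /=; tauto.
Qed.

Lemma self_desc (Sigma : Type) (q : st Sigma) : List.In q (desc q).
Proof. by case: q => [| |[]|f] /=; left. Qed.

Lemma step_desc (Sigma : eqType) (p q : st Sigma) :
  pa_step (Aut Sigma) p q -> List.In p (desc q).
Proof.
case=> [[r [s [ne H]]]|[[a ->]|[r [s ->]]]].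
- move: ne H; case: q => [| |e|f] //=; last first.
    by repeat case: st_dec => // ?; subst => /= _ [->|->]; inl_tac.
  case: e => //= [e f|e f|e f|e|e]; repeat case: st_dec => //= ?; subst => /= _ [->|->]; inl_tac.
- case: q => [| |e|f] /=; try inl_tac.
  case: e => /=; try inl_tac.
  move=> b; case: (_ == _); inl_tac.
- case: q => [| |e|f] /=; try inl_tac; last first.
    by repeat case: st_dec => // ?; inl_tac.
  case: e => //= [| |b|e f|e f|e f|e|e]; try inl_tac; repeat case: st_dec => //= ?; inl_tac.
Qed.

Lemma le_desc (Sigma : eqType) (p q : st Sigma) :
  pa_le (Aut Sigma) p q -> List.In p (desc q).
Proof.
elim => [x y /step_desc //| x | x y z _ h1 _ h2]; first exact: self_desc.
exact: incl_desc h2 _ h1.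
Qed.

Lemma fs (Sigma : eqType) : finitely_supported (Aut Sigma).
Proof. by move=> q; exists (desc q) => p /le_desc. Qed.

Theorem mainTheorem2 (Sigma : finType) (e : spr Sigma) :
  exists (A : PA Sigma),
    [/\ well_nested A, finitely_supported A &
        exists q : pa_Q A, forall U : lposet Sigma, pa_lang A q U <-> spr_sem e U].
Proof.
exists (Aut Sigma); split; [exact: wn | exact: fs |].
by exists (Ex e) => U; exact: lang_ok.
Qed.
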